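(* Let $\xi$ be the distribution defined below. Then $\widehat\xi(1)<\infty$ and $\widehat\xi(1+i)=0$.
   Context: Define on $[0,\infty)$ the functions $\phi_1(x)=e^{-x}\big(3\pi+1+\sqrt2\sin(x-\tfrac{\pi}{4})\big)$ and $\phi_2(x)=\frac{1}{3\pi}1_{[0,2\pi)}(x)+\sum_{n=1}^\infty\frac{1}{\pi^3n^2}1_{[2n\pi,2(n+1)\pi)}(x)$. Both are positive, right-continuous and decreasing on $[0,\infty)$, with $\phi_1(0)\phi_2(0)=1$. Let $\xi$ be the probability distribution on $[0,\infty)$ whose tail is $\bar\xi(x):=\xi((x,\infty))=\phi_1(x)\phi_2(x)$ for $x\ge0$. For a distribution $\rho$, $\widehat\rho(w):=\int e^{wx}\rho(dx)$ for complex $w$ whenever the integral converges absolutely. *)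

(* Defs.v *)
From Stdlib Require Import Reals Lra.
Open Scope R_scope.

Definition phi1 (x : R) : R :=
  exp (- x) * (3 * PI + 1 + sqrt 2 * sin (x - PI / 4)).

(* phi_2(x) = 1/(3pi) 1_[0,2pi)(x) + sum_{n>=1} 1/(pi^3 n^2) 1_[2n pi, 2(n+1) pi)(x).
   For x >= 0 exactly one indicator is nonzero; the relevant index is
   n = floor(x / (2 pi)) (Int_part is the floor). *)
Definition phi2 (x : R) : R :=
  if Rlt_dec x 0 then 0
  else if Rlt_dec x (2 * PI) then / (3 * PI)
  else / (PI ^ 3 * (IZR (Int_part (x / (2 * PI)))) ^ 2).

(* tail of xi:  xi((x,oo)) = phi1 x * phi2 x for x >= 0, and 1 for x < 0
   (xi lives on [0,oo)). *)
Definition xi_tail (x : R) : R :=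
  if Rlt_dec x 0 then 1 else phi1 x * phi2 x.

Definition xi_cdf (x : R) : R := 1 - xi_tail x.

Fixpoint rs_sum (g F : R -> R) (p t : nat -> R) (n : nat) : R :=
  match n with
  | O => 0
  | S k => rs_sum g F p t k + g (t k) * (F (p (S k)) - F (p k))
  end.

Definition tagged_partition (a b : R) (n : nat) (p t : nat -> R) (delta : R) : Prop :=
  p O = a /\ p n = b /\
  (forall k, (k < n)%nat ->
     (p k < p (S k)) /\ (p k <= t k <= p (S k)) /\ (p (S k) - p k < delta)).

Definition RS_integral (g F : R -> R) (a b I : R) : Prop :=
  forall eps, 0 < eps -> exists delta, (0 < delta) /\
    forall n p t, tagged_partition a b n p t delta ->
      Rabs (rs_sum g F p t n - I) < eps.

(* L = int_[0,oo) g dmu, where mu is the measure on [0,oo) with distribution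
   function F (F(x) = mu([0,x]), right-continuous):
   mu({0}) g(0) + lim_{T -> oo} int_(0,T] g dF  (improper Lebesgue–Stieltjes). *)
Definition LS_integral_0_inf (g F : R -> R) (L : R) : Prop :=
  exists I : R -> R,
    (forall T, 0 < T -> RS_integral g F 0 T (I T)) /\
    (forall eps, 0 < eps -> exists M, forall T, M < T ->
        Rabs (g 0 * F 0 + I T - L) < eps).

(* hat xi (a + i b) = re + i im, i.e.
   int e^{ax} cos(bx) xi(dx) = re  and  int e^{ax} sin(bx) xi(dx) = im *)
Definition xi_hat_is (a b re im : R) : Prop :=
  LS_integral_0_inf (fun x => exp (a * x) * cos (b * x)) xi_cdf re /\
  LS_integral_0_inf (fun x => exp (a * x) * sin (b * x)) xi_cdf im.

(* Main.v *)
Require Import Defs.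
From Stdlib Require Import Reals Lra Lia ZArith.
From Coquelicot Require Import Coquelicot.
Open Scope R_scope.


Fixpoint sumn (f : nat -> R) (n : nat) : R :=
  match n with O => 0 | S k => sumn f k + f k end.

Lemma sumn_ext f g n : (forall k, (k < n)%nat -> f k = g k) -> sumn f n = sumn g n.
Proof. induction n; simpl; intros H; [reflexivity|]. rewrite IHn by (intros; apply H; lia). rewrite H by lia. reflexivity. Qed.

Lemma sumn_add f n m : sumn f (n + m) = sumn f n + sumn (fun k => f (n + k)%nat) m.
Proof. induction m; simpl. rewrite Nat.add_0_r; ring. rewrite Nat.add_succ_r; simpl. rewrite IHm; ring. Qed.

Lemma sumn_evenodd f n : sumn f (2 * n) = sumn (fun k => f (2*k)%nat + f (2*k+1)%nat) n.
Proof. induction n. reflexivity. replace (2 * S n)%nat with (S (S (2*n))) by lia.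
  change (sumn f (S (S (2*n)))) with (sumn f (2*n) + f (2*n)%nat + f (S (2*n))).
  rewrite IHn. cbn [sumn]. replace (S (2*n)) with (2*n+1)%nat by lia. ring. Qed.

Lemma sumn_first f n : sumn f (S n) = f O + sumn (fun k => f (S k)) n.
Proof. induction n; simpl. ring. simpl in IHn. rewrite IHn. ring. Qed.

Lemma sumn_rev f n : sumn f n = sumn (fun k => f (n - 1 - k)%nat) n.
Proof. induction n. reflexivity. rewrite (sumn_first (fun k => f (S n - 1 - k)%nat)).
  change (sumn f (S n)) with (sumn f n + f n). rewrite IHn.
  replace (S n - 1 - 0)%nat with n by lia. rewrite Rplus_comm. f_equal.
  apply sumn_ext. intros k Hk. f_equal. lia. Qed.

Lemma sumn_plus f g n : sumn (fun k => f k + g k) n = sumn f n + sumn g n.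
Proof. induction n; simpl. ring. rewrite IHn; ring. Qed.

Lemma sumn_scal a f n : sumn (fun k => a * f k) n = a * sumn f n.
Proof. induction n; simpl. ring. rewrite IHn; ring. Qed.

Lemma sumn_const a n : sumn (fun _ => a) n = INR n * a.
Proof. induction n; simpl sumn. simpl; ring. rewrite IHn, S_INR; ring. Qed.

Lemma sumn_le f g n : (forall k, (k < n)%nat -> f k <= g k) -> sumn f n <= sumn g n.
Proof. induction n; simpl; intros H. lra. assert (f n <= g n) by (apply H; lia).
  assert (sumn f n <= sumn g n) by (apply IHn; intros; apply H; lia). lra. Qed.

Lemma sumn_mono f n m : (forall k, 0 <= f k) -> (n <= m)%nat -> sumn f n <= sumn f m.
Proof. intros H Hnm. induction Hnm. lra. simpl. specialize (H m). lra. Qed.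

Definition csc2 x := / (sin x)^2.

Lemma dbl x : sin x <> 0 -> sin (x/2) <> 0 /\ sin ((x+PI)/2) <> 0 /\
  csc2 x = /4 * (csc2 (x/2) + csc2 ((x+PI)/2)).
Proof.
  intros H.
  assert (E1 : sin x = 2 * sin (x/2) * cos (x/2)).
  { rewrite <- sin_2a. f_equal. field. }
  assert (E2 : sin ((x+PI)/2) = cos (x/2)).
  { replace ((x+PI)/2) with (x/2 + PI/2) by field. rewrite sin_plus, sin_PI2, cos_PI2. ring. }
  rewrite E2. rewrite E1 in H.
  assert (sin (x/2) <> 0). { intro C. apply H. rewrite C. ring. }
  assert (cos (x/2) <> 0). { intro C. apply H. rewrite C. ring. }
  split; [auto|split;[auto|]].
  unfold csc2. rewrite E1, E2. pose proof (sin2_cos2 (x/2)). unfold Rsqr in H2.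
  set (s := sin (x/2)) in *. set (c := cos (x/2)) in *.
  replace (/ 4 * (/ s ^ 2 + / c ^ 2)) with (/4 * ((s*s + c*c) / (s^2 * c^2))) by (field; auto).
  rewrite H2. field; auto.
Qed.

Lemma csc_iter n : forall x, sin x <> 0 ->
  csc2 x = (/4)^n * sumn (fun k => csc2 ((x + INR k * PI) / 2^n)) (Nat.pow 2 n).
Proof.
  induction n; intros x H.
  - simpl. unfold csc2. replace ((x + 0 * PI)/1) with x by field. ring.
  - destruct (dbl x H) as (H1 & H2 & E). rewrite E, (IHn _ H1), (IHn _ H2).
    replace (Nat.pow 2 (S n)) with (2 * Nat.pow 2 n)%nat by (simpl; lia).
    rewrite sumn_evenodd, sumn_plus.
    assert (P : 2^n <> 0) by (apply pow_nonzero; lra).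
    replace (sumn (fun k => csc2 ((x + INR (2 * k) * PI) / 2 ^ S n)) (Nat.pow 2 n))
      with (sumn (fun k => csc2 ((x/2 + INR k * PI) / 2 ^ n)) (Nat.pow 2 n)).
    2:{ apply sumn_ext; intros k _. f_equal. rewrite mult_INR. simpl. field; auto. }
    replace (sumn (fun k => csc2 ((x + INR (2 * k + 1) * PI) / 2 ^ S n)) (Nat.pow 2 n))
      with (sumn (fun k => csc2 (((x+PI)/2 + INR k * PI) / 2 ^ n)) (Nat.pow 2 n)).
    2:{ apply sumn_ext; intros k _. f_equal. rewrite plus_INR, mult_INR. simpl. field; auto. }
    simpl. ring.
Qed.

Lemma deriv_mono f f' a b : a <= b ->
  (forall c, a <= c <= b -> derivable_pt_lim f c (f' c)) ->
  (forall c, a <= c <= b -> 0 <= f' c) -> f a <= f b.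
Proof.
  intros Hab Hd Hp. destruct (Req_dec a b) as [->|Hne]. lra.
  destruct (MVT_cor2 f f' a b) as (c & Hc & Hc2). lra. auto.
  assert (0 <= f' c) by (apply Hp; lra).
  assert (0 <= f' c * (b - a)) by (apply Rmult_le_pos; lra). lra.
Qed.

Lemma sin_le_id t : 0 <= t -> sin t <= t.
Proof.
  intros Ht. pose proof (deriv_mono (fun x => x - sin x) (fun x => 1 - cos x) 0 t Ht) as H.
  simpl in H. rewrite sin_0 in H. cut (0 - 0 <= t - sin t). lra. apply H.
  - intros c _. apply is_derive_Reals. auto_derive; auto. ring.
  - intros c _. pose proof (COS_bound c). lra.
Qed.

Lemma tan_ge_id t : 0 <= t <= PI/2 -> t * cos t <= sin t.
Proof.
  intros Ht. pose proof (deriv_mono (fun x => sin x - x * cos x) (fun x => x * sin x) 0 t (proj1 Ht)) as H.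
  cbv beta in H. rewrite sin_0 in H. cut (0 - 0 * cos 0 <= sin t - t * cos t). lra. apply H.
  - intros c _. apply is_derive_Reals. auto_derive; auto. ring.
  - intros c Hc. apply Rmult_le_pos. lra. apply sin_ge_0; pose proof PI_RGT_0; lra.
Qed.

Lemma csc2_bounds t : 0 < t <= PI/2 -> / t^2 <= csc2 t <= / t^2 + 1.
Proof.
  intros Ht. pose proof PI_RGT_0.
  assert (Hs : 0 < sin t) by (apply sin_gt_0; lra).
  pose proof (sin_le_id t ltac:(lra)). pose proof (tan_ge_id t ltac:(lra)).
  assert (Hc : 0 <= cos t) by (apply cos_ge_0; lra).
  pose proof (sin2_cos2 t) as E. unfold Rsqr in E.
  unfold csc2. split.
  - apply Rinv_le_contravar. apply pow_lt; auto. apply pow_incr; lra.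
  - assert (t*t * (cos t * cos t) <= sin t * sin t).
    { replace (t*t*(cos t*cos t)) with ((t * cos t)*(t*cos t)) by ring.
      apply Rmult_le_compat; try lra; apply Rmult_le_pos; lra. }
    assert (0 < t^2) by (apply pow_lt; lra). assert (0 < sin t ^2) by (apply pow_lt; lra).
    apply (Rmult_le_reg_r (t^2 * sin t ^ 2)). apply Rmult_lt_0_compat; auto.
    replace (/ sin t ^ 2 * (t ^ 2 * sin t ^ 2)) with (t^2) by (field; lra).
    replace ((/ t ^ 2 + 1) * (t ^ 2 * sin t ^ 2)) with (sin t ^ 2 + t^2 * sin t^2) by (field; lra).
    simpl. nra.
Qed.

Lemma pow4inv n : (/4)^n * (2^n)^2 = 1.
Proof. induction n. simpl; ring.
  replace ((/4)^(S n) * (2^(S n))^2) with ((/4)^n * (2^n)^2 * (/4 * 4)) by (simpl; ring).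
  rewrite IHn. field. Qed.

Lemma csc_sum n :
  sumn (fun k => csc2 ((PI/2 + INR k * PI)/(2 * 2^n))) (Nat.pow 2 n) = 2 * (2^n)^2.
Proof.
  pose proof (csc_iter (S n) (PI/2)) as H. rewrite sin_PI2 in H.
  assert (H1 : 1 <> 0) by lra. specialize (H H1). clear H1.
  unfold csc2 at 1 in H. rewrite sin_PI2 in H.
  replace (Nat.pow 2 (S n)) with (Nat.pow 2 n + Nat.pow 2 n)%nat in H by (simpl; lia).
  rewrite sumn_add in H.
  set (N := Nat.pow 2 n) in *.
  assert (HN : INR N = 2^n) by (unfold N; rewrite pow_INR; reflexivity).
  set (f := fun k => csc2 ((PI / 2 + INR k * PI) / 2 ^ S n)) in *.
  assert (E : sumn (fun k => f (N + k)%nat) N = sumn f N).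
  { rewrite sumn_rev. apply sumn_ext. intros k Hk. unfold f. unfold csc2.
    f_equal. f_equal.
    assert (E1 : INR (N + (N - 1 - k)) = 2 * 2^n - 1 - INR k).
    { rewrite plus_INR, minus_INR, minus_INR, HN; simpl; try lia. ring. }
    rewrite E1. rewrite <- sin_PI_x. f_equal. simpl. field. apply pow_nonzero; lra. }
  change (sumn (fun k : nat => csc2 ((PI / 2 + INR (N + k) * PI) / 2 ^ S n)) N) with
    (sumn (fun k => f (N + k)%nat) N) in H.
  rewrite E in H.
  pose proof (pow4inv n) as P.
  replace (sumn (fun k => csc2 ((PI / 2 + INR k * PI) / (2 * 2 ^ n))) N) with (sumn f N) by reflexivity.
  assert (H0 : / 1 ^ 2 * 4 * (2^n)^2 = ((/4)^n * (2^n)^2) * (/4 * 4) * (sumn f N + sumn f N)) by (rewrite H at 1; simpl; ring).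
  rewrite P in H0. replace (/ 1 ^ 2) with 1 in H0 by (simpl; field). replace (/4*4) with 1 in H0 by field. lra.
Qed.

Definition oddS N := sumn (fun k => / (2 * INR k + 1)^2) N.
Definition zS N := sumn (fun k => / (INR k + 1)^2) N.

Lemma odd_bounds n :
  PI^2/8 - PI^2/(16 * 2^n) <= oddS (Nat.pow 2 n) <= PI^2/8.
Proof.
  pose proof PI_RGT_0 as HPI.
  set (N := Nat.pow 2 n).
  assert (HN : INR N = 2^n) by (unfold N; rewrite pow_INR; reflexivity).
  assert (Hp : 0 < 2^n) by (apply pow_lt; lra).
  set (C := 16 * (2^n)^2 / PI^2).
  assert (HC : 0 < C) by (unfold C; apply Rdiv_lt_0_compat; [nra| apply pow_lt; lra]).
  assert (Hterm : forall k, (k < N)%nat ->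
    / ((PI/2 + INR k * PI)/(2 * 2^n))^2 <= csc2 ((PI/2 + INR k * PI)/(2 * 2^n)) <=
    / ((PI/2 + INR k * PI)/(2 * 2^n))^2 + 1).
  { intros k Hk. apply csc2_bounds.
    assert (INR k + 1 <= INR N) by (rewrite <- S_INR; apply le_INR; lia).
    pose proof (pos_INR k). split.
    - apply Rdiv_lt_0_compat; nra.
    - apply (Rmult_le_reg_r (2 * 2^n)). lra. unfold Rdiv. rewrite Rmult_assoc, Rinv_l by lra. nra. }
  assert (Heq : forall k, / ((PI/2 + INR k * PI)/(2 * 2^n))^2 = C * / (2 * INR k + 1)^2).
  { intros k. pose proof (pos_INR k). unfold C. field. repeat split; try lra; try (apply pow_nonzero; lra); nra. }
  pose proof (csc_sum n) as S. fold N in S.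
  assert (L : C * oddS N <= 2 * (2^n)^2).
  { rewrite <- S. unfold oddS. rewrite <- sumn_scal. apply sumn_le. intros k Hk.
    rewrite <- Heq. apply Hterm; auto. }
  assert (U : 2 * (2^n)^2 <= C * oddS N + INR N).
  { rewrite <- S. unfold oddS. rewrite <- sumn_scal.
    replace (INR N) with (INR N * 1) by ring. rewrite <- sumn_const, <- sumn_plus.
    apply sumn_le. intros k Hk. rewrite <- Heq. apply Hterm; auto. }
  rewrite HN in U. unfold C in L, U.
  assert (PI^2 > 0) by nra.
  split.
  - apply (Rmult_le_reg_l (16 * (2^n)^2 / PI^2)). apply HC.
    replace (16 * (2 ^ n) ^ 2 / PI ^ 2 * (PI ^ 2 / 8 - PI ^ 2 / (16 * 2 ^ n))) with (2 * (2^n)^2 - 2^n) by (field; lra). lra.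
  - apply (Rmult_le_reg_l (16 * (2^n)^2 / PI^2)). apply HC.
    replace (16 * (2 ^ n) ^ 2 / PI ^ 2 * (PI ^ 2 / 8)) with (2 * (2^n)^2) by (field; lra). lra.
Qed.

Lemma oddS_mono n m : (n <= m)%nat -> oddS n <= oddS m.
Proof. intros. unfold oddS. apply sumn_mono; auto. intros k. apply Rlt_le, Rinv_0_lt_compat.
  pose proof (pos_INR k). apply pow_lt. lra. Qed.

Lemma zS_mono n m : (n <= m)%nat -> zS n <= zS m.
Proof. intros. unfold zS. apply sumn_mono; auto. intros k. apply Rlt_le, Rinv_0_lt_compat.
  pose proof (pos_INR k). apply pow_lt. lra. Qed.

Lemma lt_pow2 N : (N < Nat.pow 2 N)%nat.
Proof. induction N. simpl; lia. simpl. lia. Qed.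

Lemma oddS_le N : oddS N <= PI^2/8.
Proof. eapply Rle_trans. apply (oddS_mono N (Nat.pow 2 N)). pose proof (lt_pow2 N); lia.
  apply odd_bounds. Qed.

Lemma oddS_cv : Un_cv oddS (PI^2/8).
Proof.
  intros eps He. pose proof PI_RGT_0.
  destruct (archimed_cor1 (eps / PI^2)) as (n & Hn & Hn0).
  { apply Rdiv_lt_0_compat; auto. nra. }
  exists (Nat.pow 2 n). intros m Hm. unfold R_dist.
  pose proof (odd_bounds n) as [B1 _]. pose proof (oddS_mono _ _ Hm). pose proof (oddS_le m).
  assert (PI^2/(16*2^n) < eps).
  { assert (INR n <= 2^n). { rewrite <- (pow_INR 2). apply le_INR. pose proof (lt_pow2 n); lia. }
    assert (0 < INR n) by (apply lt_0_INR; auto).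
    assert (/ 2^n <= / INR n) by (apply Rinv_le_contravar; auto).
    assert (PI^2 > 0) by nra.
    assert (/ INR n * PI^2 < eps). { apply (Rmult_lt_reg_r (/ PI^2)). apply Rinv_0_lt_compat; auto.
      replace (/ INR n * PI ^ 2 * / PI ^ 2) with (/ INR n) by (field; lra). exact Hn. }
    unfold Rdiv. rewrite Rinv_mult. nra. }
  rewrite Rabs_left1; lra.
Qed.

Lemma zS_dbl N : zS (2 * N) = oddS N + zS N / 4.
Proof. unfold zS, oddS. rewrite sumn_evenodd. unfold Rdiv. rewrite Rmult_comm, <- sumn_scal, <- sumn_plus.
  apply sumn_ext. intros k _. rewrite plus_INR, mult_INR. simpl. pose proof (pos_INR k). field. lra. Qed.

Lemma zS_le N : zS N <= PI^2/6.
Proof. pose proof (zS_dbl N). pose proof (zS_mono N (2*N) ltac:(lia)). pose proof (oddS_le N). lra. Qed.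

Lemma zS_cv : Un_cv zS (PI^2/6).
Proof.
  destruct (growing_cv zS) as [l Hl].
  { intros n. apply zS_mono; lia. }
  { exists (PI^2/6). intros x [n ->]. apply zS_le. }
  assert (H1 : Un_cv (fun N => zS (2*N)) l).
  { intros eps He. destruct (Hl eps He) as [N0 HN]. exists N0. intros n Hn. apply HN. lia. }
  assert (H2 : Un_cv (fun N => oddS N + zS N * /4) (PI^2/8 + l * /4)).
  { apply CV_plus. apply oddS_cv. apply CV_mult. auto. intros eps He. exists O. intros. unfold R_dist.
    rewrite Rminus_diag, Rabs_R0. auto. }
  assert (l = PI^2/8 + l * /4).
  { eapply UL_sequence. apply H1. eapply Un_cv_ext; [|apply H2]. intros n. rewrite zS_dbl. reflexivity. }
  replace (PI^2/6) with l by lra. auto.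
Qed.


Definition AA := 3 * PI + 1.
Definition phi (s : R) := AA + sin s - cos s.

Lemma phi1_eq x : phi1 x = exp (- x) * phi x.
Proof.
  unfold phi1, phi, AA. f_equal. rewrite sin_minus, cos_PI4, sin_PI4.
  pose proof Rlt_sqrt2_0. field. lra.
Qed.

Definition cc (k : nat) : R :=
  match k with O => / (3 * PI) | S _ => / (PI^3 * (INR k)^2) end.

Definition mm (s : R) : nat := Z.to_nat (Int_part (s / (2 * PI))).

Lemma exp_le a b : a <= b -> exp a <= exp b.
Proof. intros H. destruct (Req_dec a b). subst; lra. left; apply exp_increasing; lra. Qed.

Lemma mm_spec s : 0 <= s -> 2 * PI * INR (mm s) <= s < 2 * PI * (INR (mm s) + 1).
Proof.
  intros Hs. pose proof PI_RGT_0. destruct (base_Int_part (s / (2*PI))) as [H1 H2].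
  assert (H0 : (0 <= Int_part (s / (2*PI)))%Z).
  { assert (Hm : -1 < IZR (Int_part (s / (2*PI)))).
    { assert (0 <= s / (2*PI)) by (apply Rdiv_le_0_compat; lra). lra. }
    apply lt_IZR in Hm. lia. }
  unfold mm. rewrite INR_IZR_INZ, Z2Nat.id by auto.
  set (z := IZR (Int_part (s / (2 * PI)))) in *. split.
  - apply (Rmult_le_reg_r (/ (2*PI))). apply Rinv_0_lt_compat; lra.
    replace (2 * PI * z * / (2 * PI)) with z by (field; lra). exact H1.
  - apply (Rmult_lt_reg_r (/ (2*PI))). apply Rinv_0_lt_compat; lra.
    replace (2 * PI * (z + 1) * / (2 * PI)) with (z + 1) by (field; lra). unfold Rdiv in H2. lra.
Qed.

Lemma mm_unique s m : 2 * PI * INR m <= s < 2 * PI * (INR m + 1) -> mm s = m.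
Proof.
  intros [H1 H2]. pose proof PI_RGT_0. unfold mm.
  rewrite <- (Int_part_spec (s / (2*PI)) (Z.of_nat m)). apply Nat2Z.id.
  rewrite <- INR_IZR_INZ. split.
  - apply (Rmult_lt_reg_r (2*PI)). lra. replace ((s / (2 * PI) - 1) * (2 * PI)) with (s - 2*PI) by (field; lra). lra.
  - apply (Rmult_le_reg_r (2*PI)). lra. replace (s / (2 * PI) * (2 * PI)) with s by (field; lra). lra.
Qed.

Lemma mm_mono x y : 0 <= x -> x <= y -> (mm x <= mm y)%nat.
Proof.
  intros Hx Hxy. pose proof (mm_spec x Hx). pose proof (mm_spec y ltac:(lra)). pose proof PI_RGT_0.
  destruct (le_lt_dec (mm x) (mm y)) as [|Hlt]; auto. exfalso.
  apply le_INR in Hlt. rewrite S_INR in Hlt. nra.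
Qed.

Lemma cdf_eq s : 0 <= s -> xi_cdf s = 1 - cc (mm s) * (exp (- s) * phi s).
Proof.
  intros Hs. pose proof PI_RGT_0. unfold xi_cdf, xi_tail, phi2.
  destruct (Rlt_dec s 0). lra. rewrite phi1_eq.
  destruct (Rlt_dec s (2 * PI)).
  - assert (mm s = O). { apply mm_unique. simpl. lra. } rewrite H0. simpl. ring.
  - pose proof (mm_spec s Hs). destruct (mm s) as [|k] eqn:E.
    + simpl in H0. lra.
    + unfold cc. unfold mm in E. rewrite <- E. rewrite INR_IZR_INZ, Z2Nat.id. ring.
      destruct (base_Int_part (s / (2*PI))) as [H1 H2].
      assert (Hm : -1 < IZR (Int_part (s / (2*PI)))).
      { assert (0 <= s / (2*PI)) by (apply Rdiv_le_0_compat; lra). lra. }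
      apply lt_IZR in Hm. lia.
Qed.

Lemma cc_bounds k : 0 <= cc k <= 1.
Proof.
  pose proof PI_RGT_0. pose proof PI2_3_2. destruct k; unfold cc.
  - split. apply Rlt_le, Rinv_0_lt_compat; lra.
    rewrite <- Rinv_1. apply Rinv_le_contravar; lra.
  - assert (1 <= INR (S k)) by (rewrite S_INR; pose proof (pos_INR k); lra).
    assert (1 <= PI^3) by (replace (PI^3) with (PI*PI*PI) by ring; nra).
    assert (1 <= INR (S k) ^ 2) by (replace (INR (S k)^2) with (INR (S k) * INR (S k)) by ring; nra).
    assert (1 <= PI ^ 3 * INR (S k) ^ 2) by nra.
    split. apply Rlt_le, Rinv_0_lt_compat; lra.
    rewrite <- Rinv_1. apply Rinv_le_contravar; lra.
Qed.


Lemma lip f df x y M : (forall c, derivable_pt_lim f c (df c)) ->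
  (forall c, x <= c <= y -> Rabs (df c) <= M) ->
  forall u v, x <= u <= y -> x <= v <= y -> Rabs (f u - f v) <= M * Rabs (u - v).
Proof.
  intros Hd Hb u v Hu Hv. destruct (MVT_abs f df v u) as (c & E & Hc). intros; auto.
  rewrite E. apply Rmult_le_compat_r. apply Rabs_pos. apply Hb.
  unfold Rmin, Rmax in Hc. destruct (Rle_dec v u); lra.
Qed.

Lemma smooth_err f df G dG ddG P x y M :
  (forall c, derivable_pt_lim f c (df c)) ->
  (forall c, derivable_pt_lim G c (dG c)) ->
  (forall c, derivable_pt_lim dG c (ddG c)) ->
  (forall c, derivable_pt_lim P c (f c * dG c)) ->
  (forall c, x <= c <= y -> Rabs (f c) <= M /\ Rabs (df c) <= M /\ Rabs (dG c) <= M /\ Rabs (ddG c) <= M) ->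
  forall a b t, x <= a -> a <= b -> b <= y -> x <= t <= y ->
  Rabs (f t * (G b - G a) - (P b - P a)) <= 2 * M * M * (b - a) * (y - x).
Proof.
  intros Hf HG HdG HP Hb a b t Ha Hab Hby Ht.
  assert (HM : 0 <= M) by (destruct (Hb t Ht) as (H1 & _); pose proof (Rabs_pos (f t)); lra).
  destruct (Req_dec a b) as [<-|Hne].
  { replace (f t * (G a - G a) - (P a - P a)) with 0 by ring. rewrite Rabs_R0. lra. }
  destruct (MVT_cor2 G dG a b) as (c1 & E1 & Hc1). lra. intros; auto.
  destruct (MVT_cor2 P (fun c => f c * dG c) a b) as (c2 & E2 & Hc2). lra. intros; auto.
  rewrite E1, E2.
  replace (f t * (dG c1 * (b - a)) - f c2 * dG c2 * (b - a)) with
    ((b - a) * ((f t - f c2) * dG c1 + f c2 * (dG c1 - dG c2))) by ring.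
  rewrite Rabs_mult, (Rabs_right (b - a)) by lra.
  assert (Hc1' : x <= c1 <= y) by lra. assert (Hc2' : x <= c2 <= y) by lra.
  assert (D : forall u v, x <= u <= y -> x <= v <= y -> Rabs (u - v) <= y - x).
  { intros u v Hu Hv. unfold Rabs. destruct (Rcase_abs (u - v)); lra. }
  assert (L1 : Rabs (f t - f c2) <= M * (y - x)).
  { eapply Rle_trans. apply (lip f df x y M); auto. intros c Hc; apply (Hb c Hc).
    apply Rmult_le_compat_l; auto. }
  assert (L2 : Rabs (dG c1 - dG c2) <= M * (y - x)).
  { eapply Rle_trans. apply (lip dG ddG x y M); auto. intros c Hc; apply (Hb c Hc).
    apply Rmult_le_compat_l; auto. }
  destruct (Hb c1 Hc1') as (_ & _ & B1 & _). destruct (Hb c2 Hc2') as (B2 & _ & _ & _).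
  assert (X : Rabs ((f t - f c2) * dG c1 + f c2 * (dG c1 - dG c2)) <= 2 * M * M * (y - x)).
  { eapply Rle_trans. apply Rabs_triang. rewrite !Rabs_mult.
    assert (Rabs (f t - f c2) * Rabs (dG c1) <= M * (y - x) * M).
    { apply Rmult_le_compat; auto using Rabs_pos. }
    assert (Rabs (f c2) * Rabs (dG c1 - dG c2) <= M * (M * (y - x))).
    { apply Rmult_le_compat; auto using Rabs_pos. }
    lra. }
  replace (2 * M * M * (b - a) * (y - x)) with ((b - a) * (2 * M * M * (y - x))) by ring.
  apply Rmult_le_compat_l; lra.
Qed.

Section G.
Variables al be ga : R.

Definition hh s := al + be * cos s + ga * sin s.
Definition gg s := exp s * hh s.
Definition dgg s := exp s * (al + (be + ga) * cos s + (ga - be) * sin s).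
Definition GG s := - (exp (- s) * phi s).
Definition dGG s := exp (- s) * (AA - 2 * cos s).
Definition ddGG s := exp (- s) * (2 * sin s + 2 * cos s - AA).
Definition PP s := (al * AA - be) * s + (be * AA - 2 * al) * sin s - ga * AA * cos s
   - be / 2 * sin (2 * s) + ga / 2 * cos (2 * s).
Definition DD := 2 * PI * (al * AA - be).

Lemma d_gg c : derivable_pt_lim gg c (dgg c).
Proof. apply is_derive_Reals. unfold gg, hh, dgg. auto_derive; auto. ring. Qed.
Lemma d_GG c : derivable_pt_lim GG c (dGG c).
Proof. apply is_derive_Reals. unfold GG, dGG, phi. auto_derive; auto. ring. Qed.
Lemma d_dGG c : derivable_pt_lim dGG c (ddGG c).
Proof. apply is_derive_Reals. unfold dGG, ddGG. auto_derive; auto. ring. Qed.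
Lemma d_PP c : derivable_pt_lim PP c (gg c * dGG c).
Proof. apply is_derive_Reals. unfold PP, gg, hh, dGG. auto_derive; auto.
  replace (exp c * (al + be * cos c + ga * sin c) * (exp (- c) * (AA - 2 * cos c)))
    with ((exp c * exp (- c)) * ((al + be * cos c + ga * sin c) * (AA - 2 * cos c))) by ring.
  rewrite <- exp_plus, Rplus_opp_r, exp_0. rewrite cos_2a_cos, sin_2a. field. Qed.

Lemma abs3 a b d u v : Rabs u <= 1 -> Rabs v <= 1 -> Rabs (a + b * u + d * v) <= Rabs a + Rabs b + Rabs d.
Proof.
  intros Hu Hv. eapply Rle_trans. apply Rabs_triang. eapply Rle_trans. apply Rplus_le_compat_r. apply Rabs_triang.
  rewrite !Rabs_mult.
  assert (Rabs b * Rabs u <= Rabs b) by (pose proof (Rabs_pos b); pose proof (Rabs_pos u); nra).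
  assert (Rabs d * Rabs v <= Rabs d) by (pose proof (Rabs_pos d); pose proof (Rabs_pos v); nra).
  lra.
Qed.

Lemma abs_sin x : Rabs (sin x) <= 1.
Proof. pose proof (SIN_bound x). unfold Rabs; destruct Rcase_abs; lra. Qed.
Lemma abs_cos x : Rabs (cos x) <= 1.
Proof. pose proof (COS_bound x). unfold Rabs; destruct Rcase_abs; lra. Qed.

Definition BB := Rabs al + Rabs be + Rabs ga.
Definition MM T := 2 * BB * exp T + AA + 4.

Lemma AA_gt : 10 < AA.
Proof. unfold AA. pose proof PI2_3_2. lra. Qed.

Lemma bounds T c : 0 <= c <= T ->
  Rabs (gg c) <= MM T /\ Rabs (dgg c) <= MM T /\ Rabs (dGG c) <= MM T /\ Rabs (ddGG c) <= MM T.
Proof.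
  intros Hc. unfold MM, BB. pose proof AA_gt.
  assert (E1 : exp c <= exp T) by (apply exp_le; lra).
  assert (E2 : exp (- c) <= 1) by (rewrite <- exp_0; apply exp_le; lra).
  pose proof (exp_pos c). pose proof (exp_pos (-c)). pose proof (exp_pos T).
  pose proof (Rabs_pos al). pose proof (Rabs_pos be). pose proof (Rabs_pos ga).
  assert (B3 : Rabs (be + ga) <= Rabs be + Rabs ga) by apply Rabs_triang.
  assert (B4 : Rabs (ga - be) <= Rabs be + Rabs ga).
  { unfold Rminus. eapply Rle_trans. apply Rabs_triang. rewrite Rabs_Ropp. lra. }
  unfold gg, hh, dgg, dGG, ddGG. rewrite !Rabs_mult, (Rabs_right (exp c)), (Rabs_right (exp (-c))) by lra.
  pose proof (abs3 al be ga (cos c) (sin c) (abs_cos c) (abs_sin c)) as K5.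
  pose proof (abs3 al (be + ga) (ga - be) (cos c) (sin c) (abs_cos c) (abs_sin c)) as K6.
  pose proof (abs3 AA (-2) 0 (cos c) (sin c) (abs_cos c) (abs_sin c)) as K7.
  pose proof (abs3 (- AA) 2 2 (cos c) (sin c) (abs_cos c) (abs_sin c)) as K8.
  rewrite Rabs_R0 in K7. rewrite Rabs_Ropp in K8. rewrite (Rabs_right AA) in K7, K8 by lra.
  replace (Rabs (-2)) with 2 in K7 by (unfold Rabs; destruct Rcase_abs; lra).
  replace (Rabs 2) with 2 in K8 by (rewrite Rabs_right; lra).
  replace (AA - 2 * cos c) with (AA + -2 * cos c + 0 * sin c) by ring.
  replace (2 * sin c + 2 * cos c - AA) with (- AA + 2 * cos c + 2 * sin c) by ring.
  repeat split.
  - assert (exp c * Rabs (al + be * cos c + ga * sin c) <= exp T * (Rabs al + Rabs be + Rabs ga)).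
    { apply Rmult_le_compat; auto using Rabs_pos; lra. } nra.
  - assert (exp c * Rabs (al + (be + ga) * cos c + (ga - be) * sin c) <= exp T * (2 * (Rabs al + Rabs be + Rabs ga))).
    { apply Rmult_le_compat; auto using Rabs_pos; lra. } nra.
  - assert (exp (-c) * Rabs (AA + -2 * cos c + 0 * sin c) <= 1 * (AA + 2 + 0)).
    { apply Rmult_le_compat; [lra | apply Rabs_pos | lra | lra]. } nra.
  - assert (exp (-c) * Rabs (- AA + 2 * cos c + 2 * sin c) <= 1 * (AA + 2 + 2)).
    { apply Rmult_le_compat; [lra | apply Rabs_pos | lra | lra]. } nra.
Qed.

End G.


Lemma RS_local (g F H U : R -> R) a b K :
  0 <= K ->
  (forall x y, a <= x -> x <= y -> y <= b -> U x <= U y) ->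
  (forall x t y, a <= x -> x <= t -> t <= y -> y <= b -> y - x <= 1 ->
     Rabs (g t * (F y - F x) - (H y - H x)) <= K * (y - x) * (U y - U x)) ->
  RS_integral g F a b (H b - H a).
Proof.
  intros HK HU Hloc eps He.
  set (W := Rabs (U b - U a)).
  assert (HW : 0 <= W) by apply Rabs_pos.
  assert (Hd0 : 0 < eps / (K * W + 1)) by (apply Rdiv_lt_0_compat; nra).
  exists (Rmin 1 (eps / (K * W + 1))). split. apply Rmin_pos; lra.
  intros n p t (Hp0 & Hpn & Hp).
  set (d := Rmin 1 (eps / (K * W + 1))) in *.
  assert (Hd1 : d <= 1) by apply Rmin_l. assert (Hd2 : d <= eps / (K*W+1)) by apply Rmin_r.
  assert (A : forall k, (k <= n)%nat -> a <= p k).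
  { induction k; intros Hk. lra. destruct (Hp k ltac:(lia)) as (H1 & _). specialize (IHk ltac:(lia)). lra. }
  assert (B : forall j, (j <= n)%nat -> p (n - j)%nat <= b).
  { induction j; intros Hj. rewrite Nat.sub_0_r; lra.
    destruct (Hp (n - S j)%nat ltac:(lia)) as (H1 & _).
    replace (S (n - S j)) with (n - j)%nat in H1 by lia. specialize (IHj ltac:(lia)). lra. }
  assert (B' : forall k, (k <= n)%nat -> p k <= b).
  { intros k Hk. replace k with (n - (n - k))%nat by lia. apply B. lia. }
  assert (C : forall k, (k <= n)%nat ->
     Rabs (rs_sum g F p t k - (H (p k) - H a)) <= K * d * (U (p k) - U a)).
  { induction k; intros Hk.
    - simpl. rewrite Hp0. replace (0 - (H a - H a)) with 0 by ring. rewrite Rabs_R0. lra.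
    - simpl. specialize (IHk ltac:(lia)). destruct (Hp k ltac:(lia)) as (H1 & H2 & H3).
      pose proof (A k ltac:(lia)). pose proof (B' (S k) ltac:(lia)).
      pose proof (Hloc (p k) (t k) (p (S k)) ltac:(lra) ltac:(lra) ltac:(lra) ltac:(lra) ltac:(lra)) as L.
      pose proof (HU (p k) (p (S k)) ltac:(lra) ltac:(lra) ltac:(lra)).
      eapply Rle_trans. 2:{ instantiate (1 := K * d * (U (p k) - U a) + K * (p (S k) - p k) * (U (p (S k)) - U (p k))).
        replace (K * d * (U (p (S k)) - U a)) with (K * d * (U (p k) - U a) + K * d * (U (p (S k)) - U (p k))) by ring.
        apply Rplus_le_compat_l. apply Rmult_le_compat_r. lra. apply Rmult_le_compat_l; lra. }
      eapply Rle_trans. 2:{ apply Rplus_le_compat; [apply IHk | apply L]. }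
      eapply Rle_trans. 2: apply Rabs_triang. right. f_equal. ring. }
  specialize (C n (le_n n)). rewrite Hpn in C.
  eapply Rle_lt_trans. apply C.
  assert (Hab : a <= b) by (rewrite <- Hpn; apply A; lia).
  pose proof (HU a b ltac:(lra) ltac:(lra) ltac:(lra)).
  assert (U b - U a <= W) by apply Rle_abs.
  assert (0 < d) by (apply Rmin_pos; lra).
  assert (K * d * (U b - U a) <= K * (eps / (K * W + 1)) * W).
  { apply Rmult_le_compat; try nra. }
  assert (K * (eps / (K * W + 1)) * W < eps).
  { replace (K * (eps / (K * W + 1)) * W) with (eps * (K * W / (K * W + 1))) by (field; nra).
    assert (K * W / (K * W + 1) < 1). { apply (Rmult_lt_reg_r (K*W+1)). nra. unfold Rdiv. rewrite Rmult_assoc, Rinv_l; nra. }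
    nra. }
  lra.
Qed.

Lemma rs_sum_ext g1 g2 F p t n : (forall x, g1 x = g2 x) -> rs_sum g1 F p t n = rs_sum g2 F p t n.
Proof. intros E. induction n; simpl; auto. rewrite IHn, E. auto. Qed.

Lemma LS_ext g1 g2 F L : (forall x, g1 x = g2 x) -> LS_integral_0_inf g1 F L -> LS_integral_0_inf g2 F L.
Proof. intros E (I & H1 & H2). exists I. split.
  - intros T HT eps He. destruct (H1 T HT eps He) as (d & Hd & Hd2). exists d. split; auto.
    intros. rewrite <- (rs_sum_ext g1 g2) by auto. auto.
  - intros eps He. destruct (H2 eps He) as (M & HM). exists M. intros. rewrite <- E. auto.
Qed.


Lemma trig_2pik m : sin (2 * PI * INR m) = 0 /\ cos (2 * PI * INR m) = 1.
Proof.
  pose proof (sin_period 0 m). pose proof (cos_period 0 m).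
  rewrite Rplus_0_l, sin_0 in H. rewrite Rplus_0_l, cos_0 in H0.
  replace (2 * PI * INR m) with (2 * INR m * PI) by ring. auto.
Qed.

Lemma sin_2pi s : sin (s + 2 * PI) = sin s.
Proof. pose proof (sin_period s 1). simpl INR in H. rewrite <- H. f_equal. ring. Qed.
Lemma cos_2pi s : cos (s + 2 * PI) = cos s.
Proof. pose proof (cos_period s 1). simpl INR in H. rewrite <- H. f_equal. ring. Qed.

Section H.
Variables al be ga : R.

Lemma PP_period s : PP al be ga (s + 2 * PI) = PP al be ga s + DD al be.
Proof.
  unfold PP, DD. rewrite sin_2pi, cos_2pi.
  replace (2 * (s + 2 * PI)) with ((2 * s + 2 * PI) + 2 * PI) by ring.
  rewrite !sin_2pi, !cos_2pi. ring.
Qed.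

Definition Hk k s := DD al be * sumn cc k + (al + be) * (AA - 1) * (cc 0 - cc k)
   + cc k * (PP al be ga s - PP al be ga (2 * PI * INR k)).
Definition HH s := Hk (mm s) s.
Definition UU s := s + INR (mm s).
Definition KK T := 2 * MM al be ga T * MM al be ga T + AA * MM al be ga T.

Lemma UU_mono x y : 0 <= x -> x <= y -> UU x <= UU y.
Proof. intros. unfold UU. pose proof (le_INR _ _ (mm_mono x y H H0)). lra. Qed.

Lemma loc_err T x t y : 0 <= x -> x <= t -> t <= y -> y <= T -> y - x <= 1 ->
  Rabs (gg al be ga t * (xi_cdf y - xi_cdf x) - (HH y - HH x)) <= KK T * (y - x) * (UU y - UU x).
Proof.
  intros Hx Hxt Hty HyT Hyx. pose proof PI2_3_2 as HPI. pose proof AA_gt as HA.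
  rewrite !cdf_eq by lra. unfold HH, UU.
  set (M := MM al be ga T).
  assert (Bd : forall c, x <= c <= y -> Rabs (gg al be ga c) <= M /\ Rabs (dgg al be ga c) <= M /\
     Rabs (dGG c) <= M /\ Rabs (ddGG c) <= M).
  { intros c Hc. apply bounds. lra. }
  assert (HM : 0 <= M) by (destruct (Bd t ltac:(lra)) as (H1 & _); pose proof (Rabs_pos (gg al be ga t)); lra).
  pose proof (smooth_err (gg al be ga) (dgg al be ga) GG dGG ddGG (PP al be ga) x y M
     (d_gg al be ga) d_GG d_dGG (d_PP al be ga) Bd) as SE.
  pose proof (mm_spec x Hx) as Sx. pose proof (mm_spec y ltac:(lra)) as Sy.
  pose proof (mm_mono x y Hx ltac:(lra)) as Mxy.
  assert (Hcase : mm y = mm x \/ mm y = S (mm x)).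
  { assert (INR (mm y) < INR (mm x) + 2) by nra.
    assert ((mm y < mm x + 2)%nat). { apply INR_lt. rewrite plus_INR. simpl. lra. } lia. }
  assert (KK T = 2 * M * M + AA * M) by reflexivity.
  destruct Hcase as [E|E]; rewrite E in *; set (k := mm x) in *.
  - replace (gg al be ga t * (1 - cc k * (exp (- y) * phi y) - (1 - cc k * (exp (- x) * phi x))) - (Hk k y - Hk k x))
      with (cc k * (gg al be ga t * (GG y - GG x) - (PP al be ga y - PP al be ga x))) by (unfold Hk, GG; ring).
    rewrite Rabs_mult. pose proof (cc_bounds k). rewrite (Rabs_right (cc k)) by lra.
    specialize (SE x y t ltac:(lra) ltac:(lra) ltac:(lra) ltac:(lra)).
    assert (cc k * Rabs (gg al be ga t * (GG y - GG x) - (PP al be ga y - PP al be ga x)) <= 2 * M * M * (y - x) * (y - x)).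
    { replace (2 * M * M * (y - x) * (y - x)) with (1 * (2 * M * M * (y - x) * (y - x))) by ring.
      apply Rmult_le_compat; try lra. apply Rabs_pos. }
    replace (x + INR k - (x + INR k)) with 0 in * by ring.
    replace (y + INR k - (x + INR k)) with (y - x) by ring.
    rewrite H. assert (0 <= AA * M * (y - x) * (y - x)) by (apply Rmult_le_pos; [apply Rmult_le_pos|]; nra). nra.
  - set (j := 2 * PI * INR (S k)).
    assert (Hj1 : x < j) by (unfold j; rewrite S_INR; lra).
    assert (Hj2 : j <= y) by (unfold j; lra).
    assert (Hjk : j = 2 * PI * INR k + 2 * PI) by (unfold j; rewrite S_INR; ring).
    destruct (trig_2pik (S k)) as [sj cj]. fold j in sj, cj.
    assert (Gj : GG j = - (exp (- j) * (AA - 1))) by (unfold GG, phi; rewrite sj, cj; ring).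
    assert (gj : exp (- j) * gg al be ga j = al + be).
    { unfold gg, hh. rewrite sj, cj. replace (exp (- j) * (exp j * (al + be * 1 + ga * 0))) with
        ((exp (- j) * exp j) * (al + be)) by ring. rewrite <- exp_plus, Rplus_opp_l, exp_0. ring. }
    assert (HJ : Hk (S k) y - Hk k x = cc (S k) * (PP al be ga y - PP al be ga j)
        + (al + be) * (AA - 1) * (cc k - cc (S k)) + cc k * (PP al be ga j - PP al be ga x)).
    { assert (PJ : PP al be ga j = PP al be ga (2 * PI * INR k) + DD al be) by (rewrite Hjk; apply PP_period).
      unfold Hk. fold j. rewrite PJ.
      change (sumn cc (S k)) with (sumn cc k + cc k). ring. }
    rewrite HJ, <- gj.
    replace (gg al be ga t * (1 - cc (S k) * (exp (- y) * phi y) - (1 - cc k * (exp (- x) * phi x))) -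
      (cc (S k) * (PP al be ga y - PP al be ga j) + exp (- j) * gg al be ga j * (AA - 1) * (cc k - cc (S k)) +
       cc k * (PP al be ga j - PP al be ga x)))
     with (cc (S k) * (gg al be ga t * (GG y - GG j) - (PP al be ga y - PP al be ga j))
          + cc k * (gg al be ga t * (GG j - GG x) - (PP al be ga j - PP al be ga x))
          + (cc k - cc (S k)) * (AA - 1) * exp (- j) * (gg al be ga t - gg al be ga j))
     by (rewrite Gj; unfold GG; ring).
    pose proof (SE j y t ltac:(lra) ltac:(lra) ltac:(lra) ltac:(lra)) as E1.
    pose proof (SE x j t ltac:(lra) ltac:(lra) ltac:(lra) ltac:(lra)) as E3.
    assert (L : Rabs (gg al be ga t - gg al be ga j) <= M * (y - x)).
    { eapply Rle_trans. apply (lip (gg al be ga) (dgg al be ga) x y M (d_gg al be ga)).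
      intros c Hc; apply (Bd c Hc). lra. lra. apply Rmult_le_compat_l. lra.
      unfold Rabs; destruct Rcase_abs; lra. }
    pose proof (cc_bounds k). pose proof (cc_bounds (S k)).
    assert (Ej : exp (- j) <= 1) by (rewrite <- exp_0; apply exp_le; lra). pose proof (exp_pos (- j)).
    eapply Rle_trans. apply Rabs_triang. eapply Rle_trans. apply Rplus_le_compat_r. apply Rabs_triang.
    rewrite !Rabs_mult. rewrite (Rabs_right (cc k)), (Rabs_right (cc (S k))), (Rabs_right (exp (- j))), (Rabs_right (AA - 1)) by lra.
    assert (Rabs (cc k - cc (S k)) <= 1) by (unfold Rabs; destruct Rcase_abs; lra).
    assert (A1 : cc (S k) * Rabs (gg al be ga t * (GG y - GG j) - (PP al be ga y - PP al be ga j)) <= 2 * M * M * (y - j) * (y - x)).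
    { replace (2 * M * M * (y - j) * (y - x)) with (1 * (2 * M * M * (y - j) * (y - x))) by ring.
      apply Rmult_le_compat; try lra. apply Rabs_pos. }
    assert (A3 : cc k * Rabs (gg al be ga t * (GG j - GG x) - (PP al be ga j - PP al be ga x)) <= 2 * M * M * (j - x) * (y - x)).
    { replace (2 * M * M * (j - x) * (y - x)) with (1 * (2 * M * M * (j - x) * (y - x))) by ring.
      apply Rmult_le_compat; try lra. apply Rabs_pos. }
    assert (A2 : Rabs (cc k - cc (S k)) * (AA - 1) * exp (- j) * Rabs (gg al be ga t - gg al be ga j) <= 1 * AA * 1 * (M * (y - x))).
    { apply Rmult_le_compat. repeat apply Rmult_le_pos; try lra. apply Rabs_pos. apply Rabs_pos.
      apply Rmult_le_compat. apply Rmult_le_pos; try lra. apply Rabs_pos. lra.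
      apply Rmult_le_compat; try lra. apply Rabs_pos. lra. lra. }
    rewrite S_INR. rewrite H.
    replace (y + (INR k + 1) - (x + INR k)) with ((y - x) + 1) by ring.
    assert (0 <= M * M * (y - x)) by (apply Rmult_le_pos; nra).
    assert (0 <= AA * M * (y - x) * (y - x)) by (apply Rmult_le_pos; [apply Rmult_le_pos|]; nra).
    nra.
Qed.

Lemma RS_HH T : 0 < T -> RS_integral (gg al be ga) xi_cdf 0 T (HH T - HH 0).
Proof.
  intros HT. apply (RS_local (gg al be ga) xi_cdf HH UU 0 T (KK T)).
  - unfold KK. pose proof AA_gt. assert (0 <= MM al be ga T).
    { unfold MM, BB. pose proof (exp_pos T). pose proof (Rabs_pos al). pose proof (Rabs_pos be). pose proof (Rabs_pos ga). nra. }
    nra.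
  - intros. apply UU_mono; lra.
  - intros. apply loc_err; lra.
Qed.

End H.


Lemma cdf0 : xi_cdf 0 = 0.
Proof. rewrite cdf_eq by lra. assert (mm 0 = O) by (apply mm_unique; simpl; pose proof PI_RGT_0; lra).
  rewrite H. unfold cc, phi, AA. rewrite Ropp_0, exp_0, sin_0, cos_0. pose proof PI_RGT_0. field. lra. Qed.

Lemma sumcc_cv : Un_cv (sumn cc) (/ (2 * PI)).
Proof.
  intros eps He. pose proof PI_RGT_0.
  assert (P3 : 0 < PI^3) by (apply pow_lt; lra).
  destruct (zS_cv (eps * PI^3) ltac:(nra)) as [N HN].
  exists (S N). intros m Hm. destruct m as [|n]. lia.
  rewrite sumn_first.
  replace (sumn (fun k => cc (S k)) n) with (/ PI^3 * zS n).
  2:{ unfold zS. rewrite <- sumn_scal. apply sumn_ext. intros k _. unfold cc. rewrite S_INR. field. split; [|lra].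
      pose proof (pos_INR k). lra. }
  specialize (HN n ltac:(lia)). unfold R_dist in *.
  replace (cc 0 + / PI ^ 3 * zS n - / (2 * PI)) with (/ PI^3 * (zS n - PI^2/6)) by (unfold cc; field; lra).
  rewrite Rabs_mult, Rabs_right by (left; apply Rinv_0_lt_compat; auto).
  apply (Rmult_lt_reg_l (PI^3)); auto. rewrite <- Rmult_assoc, Rinv_r by lra. lra.
Qed.

Lemma cc_cv : Un_cv cc 0.
Proof.
  intros eps He. destruct (archimed_cor1 eps He) as (N & HN & HN0). exists N. intros m Hm.
  unfold R_dist. rewrite Rminus_0_r. pose proof (cc_bounds m). rewrite Rabs_right by lra.
  destruct m as [|k]. lia. unfold cc.
  assert (INR N <= INR (S k)) by (apply le_INR; lia).
  assert (0 < INR N) by (apply lt_0_INR; lia).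
  pose proof PI2_3_2.
  assert (INR (S k) <= PI^3 * INR (S k)^2).
  { assert (1 <= INR (S k)) by (rewrite S_INR; pose proof (pos_INR k); lra). assert (1 <= PI^3) by (replace (PI^3) with (PI*PI*PI) by ring; nra).
    replace (PI^3 * INR (S k)^2) with (PI^3 * INR (S k) * INR (S k)) by ring. nra. }
  eapply Rle_lt_trans. 2: apply HN. apply Rinv_le_contravar; lra.
Qed.

Section L.
Variables al be ga : R.

Lemma HH0 : HH al be ga 0 = 0.
Proof. unfold HH, Hk. assert (mm 0 = O) by (apply mm_unique; simpl; pose proof PI_RGT_0; lra).
  rewrite H. simpl sumn. simpl INR. rewrite !Rmult_0_r. ring. Qed.

Lemma PPdiff T : 0 <= T ->
  Rabs (PP al be ga T - PP al be ga (2 * PI * INR (mm T))) <= BB al be ga * (AA + 2) * (2 * PI).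
Proof.
  intros HT. pose proof (mm_spec T HT). pose proof PI_RGT_0. pose proof AA_gt.
  eapply Rle_trans. apply (lip (PP al be ga) (fun c => gg al be ga c * dGG c) (2 * PI * INR (mm T)) T (BB al be ga * (AA + 2))).
  apply d_PP. 
  - intros c _. unfold gg, dGG.
    replace (exp c * hh al be ga c * (exp (- c) * (AA - 2 * cos c))) with ((exp c * exp (- c)) * (hh al be ga c * (AA - 2 * cos c))) by ring.
    rewrite <- exp_plus, Rplus_opp_r, exp_0, Rmult_1_l, Rabs_mult.
    unfold hh, BB. pose proof (abs3 al be ga (cos c) (sin c) (abs_cos c) (abs_sin c)).
    pose proof (abs_cos c).
    assert (Rabs (AA - 2 * cos c) <= AA + 2).
    { pose proof (COS_bound c). unfold Rabs; destruct Rcase_abs; lra. }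
    apply Rmult_le_compat; auto using Rabs_pos.
  - lra.
  - lra.
  - apply Rmult_le_compat_l. unfold BB. pose proof (Rabs_pos al). pose proof (Rabs_pos be). pose proof (Rabs_pos ga). nra.
    unfold Rabs; destruct Rcase_abs; lra.
Qed.

Lemma LS_main : LS_integral_0_inf (gg al be ga) xi_cdf (al * (AA + 1)).
Proof.
  exists (fun T => HH al be ga T - HH al be ga 0). split.
  - intros T HT. apply RS_HH; auto.
  - intros eps He. pose proof PI_RGT_0. pose proof AA_gt.
    set (C2 := Rabs (al + be) * (AA - 1) + BB al be ga * (AA + 2) * (2 * PI)).
    assert (HC2 : 0 <= C2).
    { unfold C2, BB. pose proof (Rabs_pos al). pose proof (Rabs_pos be). pose proof (Rabs_pos ga). pose proof (Rabs_pos (al+be)).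
      assert (0 <= Rabs (al + be) * (AA - 1)) by (apply Rmult_le_pos; lra).
      assert (0 <= (Rabs al + Rabs be + Rabs ga) * (AA + 2)) by (apply Rmult_le_pos; lra).
      assert (0 <= (Rabs al + Rabs be + Rabs ga) * (AA + 2) * (2 * PI)) by (apply Rmult_le_pos; lra). lra. }
    set (D := Rabs (DD al be)). assert (HD : 0 <= D) by apply Rabs_pos.
    set (e := eps / (D + C2 + 1)).
    assert (He' : 0 < e) by (apply Rdiv_lt_0_compat; lra).
    destruct (sumcc_cv e He') as [N1 HN1]. destruct (cc_cv e He') as [N2 HN2].
    exists (2 * PI * (INR (N1 + N2) + 1)). intros T HT.
    assert (T0 : 0 <= T) by (pose proof (pos_INR (N1 + N2)); assert (0 < 2*PI*(INR (N1+N2)+1)) by (apply Rmult_lt_0_compat; lra); lra).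
    pose proof (mm_spec T T0) as Sm.
    assert (Hm : (N1 + N2 < mm T)%nat).
    { apply INR_lt. assert (2*PI*(INR (N1+N2)+1) < 2*PI*(INR (mm T)+1)) by lra.
      apply Rmult_lt_reg_l in H1; lra. }
    rewrite cdf0, HH0. set (m := mm T) in *.
    specialize (HN1 m ltac:(lia)). specialize (HN2 m ltac:(lia)). unfold R_dist in *.
    rewrite Rminus_0_r in HN2. pose proof (cc_bounds m). rewrite Rabs_right in HN2 by lra.
    replace (gg al be ga 0 * 0 + (HH al be ga T - 0) - al * (AA + 1)) with
      (DD al be * (sumn cc m - / (2 * PI)) + (al + be) * (AA - 1) * (- cc m) + cc m * (PP al be ga T - PP al be ga (2 * PI * INR m))).
    2:{ unfold HH, Hk. fold m. unfold DD. change (cc 0) with (/ (3 * PI)). unfold AA. field. lra. }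
    pose proof (PPdiff T T0) as PD. fold m in PD.
    eapply Rle_lt_trans. apply Rabs_triang. eapply Rle_lt_trans. apply Rplus_le_compat_r. apply Rabs_triang.
    rewrite !Rabs_mult. rewrite Rabs_Ropp, (Rabs_right (cc m)), (Rabs_right (AA - 1)) by lra.
    assert (D * Rabs (sumn cc m - / (2 * PI)) <= D * e) by (apply Rmult_le_compat_l; lra).
    assert (cc m * Rabs (PP al be ga T - PP al be ga (2 * PI * INR m)) <= e * (BB al be ga * (AA + 2) * (2 * PI))).
    { apply Rmult_le_compat; try lra. apply Rabs_pos. }
    assert (Rabs (al + be) * (AA - 1) * cc m <= Rabs (al + be) * (AA - 1) * e).
    { apply Rmult_le_compat_l. pose proof (Rabs_pos (al + be)). nra. lra. }
    assert ((D + C2) * e < eps).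
    { unfold e. apply (Rmult_lt_reg_r (D + C2 + 1)). lra.
      replace ((D + C2) * (eps / (D + C2 + 1)) * (D + C2 + 1)) with ((D + C2) * eps) by (field; lra). nra. }
    unfold C2 in *. fold D. nra.
Qed.

End L.


Theorem lemma3p1 :
  (exists L : R, LS_integral_0_inf (fun x => exp x) xi_cdf L) /\
  xi_hat_is 1 1 0 0.
Proof.
  split; [|split].
  - exists (1 * (AA + 1)). apply (LS_ext (gg 1 0 0)). intros x. unfold gg, hh. ring.
    apply LS_main.
  - pose proof (LS_main 0 1 0) as H. rewrite Rmult_0_l in H. apply (LS_ext (gg 0 1 0)).
    intros x. unfold gg, hh. rewrite !Rmult_1_l. ring. exact H.
  - pose proof (LS_main 0 0 1) as H. rewrite Rmult_0_l in H. apply (LS_ext (gg 0 0 1)).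
    intros x. unfold gg, hh. rewrite !Rmult_1_l. ring. exact H.
Qed.
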